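(* Let $N\ge3$, let $f_1,\dots,f_{N-1}$ be independent variables and $\beta_1,\dots,\beta_{N-2}$ constants. For $m=1,\dots,N-2$ define $$F_m(\lambda)=\prod_{n=m}^{N-2}\Bigl(1+(\lambda+\beta_n)\frac{\partial^2}{\partial f_n\partial f_{n+1}}\Bigr)(f_m f_{m+1}\cdots f_{N-1}),$$ and $F_{N-1}(\lambda)=f_{N-1}$. Then for $m=1,\dots,N-3$, $$F_m(\lambda)=f_mF_{m+1}(\lambda)+(\lambda+\beta_m)F_{m+2}(\lambda),$$ and for $m=1,\dots,N-2$, $\dfrac{\partial F_m(\lambda)}{\partial f_m}=F_{m+1}(\lambda)$. *)

(* Defs.v *)
From HB Require Import structures.
From mathcomp Require Import all_boot all_order all_algebra.
From mathcomp Require Import mpoly.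
Set Implicit Arguments. Unset Strict Implicit. Unset Printing Implicit Defensive.
Import GRing.Theory.
Local Open Scope ring_scope.

(* Polynomials in the N-1 variables f_1, ..., f_{N-1}: the ring
   {mpoly R[N.-1]}, where f_k is the variable of index k-1. *)
Section Defs.
Variables (R : comRingType) (N : nat).

(* the variable f_k (k = 1..N-1); 0 outside that range (never used there) *)
Definition fvar (k : nat) : {mpoly R[N.-1]} :=
  match @insub _ (fun i => i < N.-1)%N 'I_N.-1 k.-1 with
  | Some i => 'X_i
  | None => 0
  end.

Definition dvar (k : nat) (p : {mpoly R[N.-1]}) : {mpoly R[N.-1]} :=
  match @insub _ (fun i => i < N.-1)%N 'I_N.-1 k.-1 with
  | Some i => mderiv i p
  | None => 0
  end.

(* The (commuting) operators are composed with n = m outermost. *)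
Definition Fpoly (beta : nat -> R) (lam : R) (m : nat) : {mpoly R[N.-1]} :=
  if m == N.-1 then fvar N.-1
  else foldr (fun n q => q + (lam + beta n) *: dvar n (dvar n.+1 q))
             (\prod_(m <= k < N) fvar k)
             (iota m (N.-1 - m)).
End Defs.

(* Main.v *)
Require Import Defs.
From HB Require Import structures.
From mathcomp Require Import all_boot all_order all_algebra.
From mathcomp Require Import mpoly.
From mathcomp Require Import zify.
Local Open Scope ring_scope.
Import GRing.Theory.

Section Aux.
Variables (R : comRingType) (N : nat) (beta : nat -> R) (lam : R).

Lemma dvarD k p q : dvar k (p + q) = dvar k p + dvar k q :> {mpoly R[N.-1]}.
Proof. by rewrite /dvar; case: insubP => [i _ _|_]; rewrite ?mderivD ?addr0. Qed.

Lemma dvarZ k (c : R) (p : {mpoly R[N.-1]}) : dvar k (c *: p) = c *: dvar k p.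
Proof. by rewrite /dvar; case: insubP => [i _ _|_]; rewrite ?mderivZ ?scaler0. Qed.

Lemma dvar0 k : dvar k (0 : {mpoly R[N.-1]}) = 0.
Proof. by rewrite /dvar; case: insubP => [i _ _|_]; rewrite ?mderiv0. Qed.

Lemma dvarM k p q : dvar k (p * q) = dvar k p * q + p * dvar k q :> {mpoly R[N.-1]}.
Proof. by rewrite /dvar; case: insubP => [i _ _|_]; rewrite ?mderivM ?mul0r ?mulr0 ?addr0. Qed.

Lemma dvarC a b (p : {mpoly R[N.-1]}) : dvar a (dvar b p) = dvar b (dvar a p).
Proof.
rewrite /dvar; case: insubP => [i _ _|_]; case: insubP => [j _ _|_];
  by rewrite ?mderiv0 // mderiv_comm.
Qed.

Lemma dvar1 k : dvar k (1 : {mpoly R[N.-1]}) = 0.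
Proof. by rewrite /dvar; case: insubP => [i _ _|_]; rewrite // -mpolyC1 mderivC. Qed.

Lemma dvar_fvar_ne k j : (1 <= k)%N -> (1 <= j)%N -> k != j ->
  dvar k (fvar R N j) = 0.
Proof.
move=> k1 j1 kj; rewrite /dvar /fvar.
case: (insubP 'I_N.-1 k.-1) => [i _ ei|_]; case: (insubP 'I_N.-1 j.-1) => [j' _ ej|_];
  rewrite ?mderiv0 //.
rewrite mderivX mnm1E.
have -> : (j' == i) = false.
  apply/negbTE; apply: contra kj => /eqP/(congr1 val); rewrite ei ej => e.
  by apply/eqP; rewrite -(prednK k1) -(prednK j1) e.
by rewrite scale0r.
Qed.

Lemma dvar_fvar_eq k : (1 <= k)%N -> (k <= N.-1)%N -> dvar k (fvar R N k) = 1.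
Proof.
move=> k1 kN; rewrite /dvar /fvar.
case: (insubP 'I_N.-1 k.-1) => [i _ ei|/negP []]; last first.
  by rewrite -ltnS prednK // (leq_trans kN (leqSpred _)).
rewrite mderivX mnm1E eqxx scale1r.
have -> : (U_(i) - U_(i))%MM = 0%MM by apply/mnmP => l; rewrite mnmBE subnn mnm0E.
exact: mpolyX0.
Qed.

Definition opn n (q : {mpoly R[N.-1]}) := q + (lam + beta n) *: dvar n (dvar n.+1 q).
Definition G s q := foldr opn q s.

Lemma dvarG k s q : dvar k (G s q) = G s (dvar k q).
Proof.
elim: s => //= n s IH; rewrite /opn dvarD dvarZ -IH; congr (_ + _ *: _).
by rewrite dvarC (dvarC k n.+1).
Qed.

Lemma G0 s : G s 0 = 0.
Proof. by elim: s => //= n s IH; rewrite IH /opn !dvar0 scaler0 addr0. Qed.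

Lemma dvarG0 k s q : dvar k q = 0 -> dvar k (G s q) = 0.
Proof. by move=> h; rewrite dvarG h G0. Qed.

Lemma G_fvar m s q : (1 <= m)%N -> all (fun n => m < n)%N s ->
  G s (fvar R N m * q) = fvar R N m * G s q.
Proof.
move=> m1; elim: s => //= n s IH /andP[mn hs]; rewrite IH // /opn.
have h k : (m < k)%N -> forall p, dvar k (fvar R N m * p) = fvar R N m * dvar k p.
  move=> mk p; rewrite dvarM dvar_fvar_ne ?mul0r ?add0r //.
  - exact: leq_trans m1 (ltnW mk).
  - by rewrite neq_ltn mk orbT.
by rewrite (h n.+1) ?(h n) ?mulrDr ?scalerAr // ltnW.
Qed.

Lemma dvar_prod k a : (1 <= k)%N -> (k < a)%N ->
  dvar k (\prod_(a <= j < N) fvar R N j) = 0.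
Proof.
move=> k1 ka; rewrite big_seq_cond; apply: (big_ind (fun p => dvar k p = 0)).
- exact: dvar1.
- by move=> x y hx hy; rewrite dvarM hx hy mul0r mulr0 addr0.
- move=> j; rewrite andbT mem_index_iota => /andP[aj _].
  apply: dvar_fvar_ne => //; first exact: leq_trans k1 (leq_trans (ltnW ka) aj).
  by rewrite neq_ltn (leq_trans ka aj).
Qed.

Lemma FpolyE m : (1 <= m)%N -> (m <= N.-1)%N ->
  Fpoly N beta lam m = G (iota m (N.-1 - m)) (\prod_(m <= k < N) fvar R N k).
Proof.
move=> m1 mN; rewrite /Fpoly; case: eqP => [->|//].
rewrite subnn /=.
have N1 : N = N.-1.+1 by rewrite prednK // (leq_trans m1 (leq_trans mN (leq_pred _))).
by rewrite big_ltn -?N1 // big_geq -?N1 // mulr1.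
Qed.


Lemma part2 m : (1 <= m)%N -> (m <= N - 2)%N ->
  dvar m (Fpoly N beta lam m) = Fpoly N beta lam m.+1.
Proof.
move=> m1 mN.
rewrite FpolyE //; last by lia.
rewrite (@FpolyE m.+1) //; last by lia.
have -> : (N.-1 - m = (N.-1 - m.+1).+1)%N by lia.
rewrite big_ltn; last by lia.
rewrite dvarG /= dvarM dvar_fvar_eq //; last by lia.
rewrite dvar_prod // mul1r mulr0 addr0 /opn dvarC dvarG0 ?dvar_prod //.
by rewrite dvar0 scaler0 addr0.
Qed.

Lemma part1 m : (1 <= m)%N -> (m <= N - 3)%N ->
  Fpoly N beta lam m =
    fvar R N m * Fpoly N beta lam m.+1 + (lam + beta m) *: Fpoly N beta lam m.+2.
Proof.
move=> m1 mN.
rewrite -(@part2 m.+1) //; last by lia.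
rewrite FpolyE //; last by lia.
rewrite (@FpolyE m.+1) //; last by lia.
have -> : (N.-1 - m = (N.-1 - m.+1).+1)%N by lia.
rewrite big_ltn; last by lia.
rewrite /= G_fvar //; last by apply/allP => x; rewrite mem_iota; lia.
rewrite /opn; congr (_ + _ *: _).
rewrite dvarM (@dvar_fvar_ne m.+1) // ?mul0r ?add0r; last by rewrite neq_ltn ltnSn orbT.
rewrite dvarM dvar_fvar_eq //; last by lia.
by rewrite (dvarC m) (@dvarG0 m) ?dvar_prod // ?dvar0 mulr0 addr0 mul1r.
Qed.

End Aux.

Theorem mainTheorem5 (R : comRingType) (N : nat) (beta : nat -> R) (lam : R) :
  (3 <= N)%N ->
  (forall m : nat, (1 <= m <= N - 3)%N ->
     Fpoly N beta lam m =
       fvar R N m * Fpoly N beta lam m.+1 + (lam + beta m) *: Fpoly N beta lam m.+2) /\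
  (forall m : nat, (1 <= m <= N - 2)%N ->
     dvar m (Fpoly N beta lam m) = Fpoly N beta lam m.+1).
Proof.
move=> _; split=> m /andP[m1 mN]; first exact: part1.
exact: part2.
Qed.
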